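(* Let $\mathfrak{G}$ be a finite alphabet, and $\mathfrak{s}$ and $\mathfrak{t}$ be two $\mathfrak{G}$-trees such that $\mathfrak{s}\preceq\mathfrak{t}$. As subposets of the $\mathfrak{G}$-prefix poset (resp. of the $(\mathfrak{G}\sqcup\{\lozenge_{|\mathfrak{s}|}\})$-prefix poset for the last one), one has the poset isomorphisms $[\mathfrak{s},\mathfrak{t}] \simeq [\text{leaf},\mathfrak{r}_1]\times\cdots\times[\text{leaf},\mathfrak{r}_{|\mathfrak{s}|}] \simeq [\lozenge_{|\mathfrak{s}|},\ \lozenge_{|\mathfrak{s}|}[\mathfrak{r}_1,\dots,\mathfrak{r}_{|\mathfrak{s}|}]]$, where $(\mathfrak{r}_1,\dots,\mathfrak{r}_{|\mathfrak{s}|})$ is the forest $\mathfrak{t}\setminus\mathfrak{s}$ and ''leaf'' denotes the tree with no internal node.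
   Context: $\mathfrak{G}$ is a finite alphabet (letters with arities $\geq 1$). A $\mathfrak{G}$-tree is either the leaf (the tree with no internal node) or a root decorated by a letter $\mathtt{a}\in\mathfrak{G}$ with $|\mathtt{a}|$ children that are $\mathfrak{G}$-trees; $|\mathfrak{s}|$ denotes the number of leaves, ordered left to right, and $\mathfrak{s}\circ[\mathfrak{r}_1,\dots,\mathfrak{r}_{|\mathfrak{s}|}]$ grafts each $\mathfrak{r}_i$ onto the $i$-th leaf of $\mathfrak{s}$. The $\mathfrak{G}$-prefix poset is the set of $\mathfrak{G}$-trees ordered by $\mathfrak{s}\preceq\mathfrak{t}$ iff $\mathfrak{t}=\mathfrak{s}\circ[\mathfrak{r}_1,\dots,\mathfrak{r}_{|\mathfrak{s}|}]$ for some $\mathfrak{G}$-trees $\mathfrak{r}_i$; these $\mathfrak{r}_i$ are then unique and form the difference $\mathfrak{t}\setminus\mathfrak{s}$. For a new letter $\lozenge_k$ of arity $k$, $\lozenge_k[\mathfrak{r}_1,\dots,\mathfrak{r}_k]$ is the tree with root decorated by $\lozenge_k$ and children $\mathfrak{r}_1,\dots,\mathfrak{r}_k$, and $\lozenge_k$ alone denotes the corolla (root $\lozenge_k$ with $k$ leaves as children). *)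

(* Defs.v *)
From mathcomp Require Import all_boot.
Set Implicit Arguments. Unset Strict Implicit. Unset Printing Implicit Defensive.

(* Planar trees whose internal nodes are decorated by letters of type A.
   Leaf = the tree with no internal node; Node a ts = root decorated by a
   with children ts (left to right). *)
Inductive tree (A : Type) : Type :=
| Leaf : tree A
| Node : A -> seq (tree A) -> tree A.
Arguments Leaf {A}.

Section Trees.
Variable A : Type.

Fixpoint nleaves (t : tree A) : nat :=
  match t with
  | Leaf => 1
  | Node _ ts => sumn (map nleaves ts)
  end.

Fixpoint wf (ar : A -> nat) (t : tree A) : bool :=
  match t with
  | Leaf => true
  | Node a ts => (size ts == ar a) && all (wf ar) ts
  end.

(* grafting s o [r_1,...,r_|s|]: the i-th tree of rs is grafted on the i-th leaf *)
Fixpoint graft (s : tree A) (rs : seq (tree A)) : tree A :=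
  match s with
  | Leaf => nth Leaf rs 0
  | Node a ts =>
      let fix graft_list (ts : seq (tree A)) (rs : seq (tree A)) :=
        match ts with
        | [::] => [::]
        | t :: ts' => graft t (take (nleaves t) rs)
                        :: graft_list ts' (drop (nleaves t) rs)
        end in
      Node a (graft_list ts rs)
  end.

Definition tprefix (ar : A -> nat) (s t : tree A) : Prop :=
  exists rs : seq (tree A),
    [/\ size rs = nleaves s, all (wf ar) rs & t = graft s rs].

Definition tinterval (ar : A -> nat) (s t : tree A) (u : tree A) : Prop :=
  wf ar u /\ tprefix ar s u /\ tprefix ar u t.

End Trees.

Fixpoint tmap (A B : Type) (f : A -> B) (t : tree A) : tree B :=
  match t with
  | Leaf => Leaf
  | Node a ts => Node (f a) (map (tmap f) ts)
  end.

(* the alphabet G extended by a new letter (None) of arity k *)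
Definition ext_ar (G : Type) (ar : G -> nat) (k : nat) (x : option G) : nat :=
  match x with Some a => ar a | None => k end.

Definition corolla (G : Type) (k : nat) : tree (option G) := Node None (nseq k Leaf).
Definition lozenge (G : Type) (rs : seq (tree G)) : tree (option G) :=
  Node None (map (tmap Some) rs).

(* Product poset [leaf, r_1] x ... x [leaf, r_k]: k-tuples (as sequences of
   size k) with componentwise tprefix order. *)
Definition prod_intervals (G : Type) (ar : G -> nat) (rs : seq (tree G))
  (us : seq (tree G)) : Prop :=
  size us = size rs /\
  forall i, i < size rs -> tinterval ar Leaf (nth Leaf rs i) (nth Leaf us i).

Definition prod_le (G : Type) (ar : G -> nat) (k : nat) (us vs : seq (tree G)) : Prop :=
  forall i, i < k -> tprefix ar (nth Leaf us i) (nth Leaf vs i).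

Definition poset_iso (T1 T2 : Type) (P1 : T1 -> Prop) (le1 : T1 -> T1 -> Prop)
  (P2 : T2 -> Prop) (le2 : T2 -> T2 -> Prop) : Prop :=
  exists (f : T1 -> T2) (g : T2 -> T1),
    [/\ (forall x, P1 x -> P2 (f x)),
        (forall y, P2 y -> P1 (g y)),
        (forall x, P1 x -> g (f x) = x),
        (forall y, P2 y -> f (g y) = y) &
        (forall x y, P1 x -> P1 y -> (le1 x y <-> le2 (f x) (f y)))].

(* Main.v *)
Require Import Defs.
From mathcomp Require Import all_boot.
Set Implicit Arguments. Unset Strict Implicit. Unset Printing Implicit Defensive.

Lemma all2_nthP (S T : Type) (r : S -> T -> bool) (x0 : S) (y0 : T) xs ys n :
  size xs = n -> size ys = n ->
  all2 r xs ys <-> (forall i, i < n -> r (nth x0 xs i) (nth y0 ys i)).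
Proof.
elim: xs ys n => [|x xs IH] [|y ys] [|n] //=.
move=> [Hx] [Hy]; split.
    by move=> /andP[h1 h2] [|i] //= Hi; exact: (proj1 (IH ys n Hx Hy) h2).
  move=> h; apply/andP; split; first exact: (h 0).
  by apply/(IH ys n Hx Hy) => i Hi; exact: (h i.+1).
Qed.

Lemma all2_size (S T : Type) (r : S -> T -> bool) xs ys :
  all2 r xs ys -> size xs = size ys.
Proof. by elim: xs ys => [|x xs IH] [|y ys] //= /andP[_ /IH ->]. Qed.

Lemma all2_cat (S T : Type) (r : S -> T -> bool) xs1 xs2 ys1 ys2 :
  size xs1 = size ys1 ->
  all2 r (xs1 ++ xs2) (ys1 ++ ys2) = all2 r xs1 ys1 && all2 r xs2 ys2.
Proof.
elim: xs1 ys1 => [|x xs IH] [|y ys] //= [H]; by rewrite IH // andbA.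
Qed.

Section TreeInd.
Variables (A : Type) (P : tree A -> Prop).
Fixpoint allP (ts : seq (tree A)) : Prop :=
  match ts with [::] => True | t :: ts' => P t /\ allP ts' end.
Hypothesis HL : P Leaf.
Hypothesis HN : forall a ts, allP ts -> P (Node a ts).
Fixpoint tree_ind2 (t : tree A) : P t :=
  match t with
  | Leaf => HL
  | Node a ts => HN a ((fix F ts : allP ts := match ts with
       | [::] => I
       | t :: ts' => conj (tree_ind2 t) (F ts') end) ts)
  end.
End TreeInd.

Fixpoint graft_list (A : Type) (ts rs : seq (tree A)) : seq (tree A) :=
  match ts with
  | [::] => [::]
  | t :: ts' => graft t (take (nleaves t) rs) :: graft_list ts' (drop (nleaves t) rs)
  end.

Lemma graftE (A : Type) (a : A) ts rs : graft (Node a ts) rs = Node a (graft_list ts rs).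
Proof. rewrite /=; congr Node; elim: ts rs => //= t ts IH rs; by rewrite IH. Qed.

Section Pre.
Variables (A : eqType) (ar : A -> nat).

Fixpoint pre (s u : tree A) {struct s} : bool :=
  match s, u with
  | Leaf, _ => wf ar u
  | Node a ts, Node b us => (a == b) && all2 pre ts us
  | Node _ _, Leaf => false
  end.

Fixpoint diff (s u : tree A) {struct s} : seq (tree A) :=
  match s with
  | Leaf => [:: u]
  | Node _ ts => match u with
     | Leaf => [::]
     | Node _ us => let fix dl ts us := match ts, us with
          | t :: ts', v :: us' => diff t v ++ dl ts' us'
          | _, _ => [::] end in dl ts us
     end
  end.

Fixpoint difflist (ts us : seq (tree A)) : seq (tree A) :=
  match ts, us with
  | t :: ts', v :: us' => diff t v ++ difflist ts' us'
  | _, _ => [::] end.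

Lemma diffE a ts b us : diff (Node a ts) (Node b us) = difflist ts us.
Proof. reflexivity. Qed.

Lemma graft_pre s rs : size rs = nleaves s -> all (wf ar) rs -> pre s (graft s rs).
Proof.
elim/tree_ind2: s rs => [|a ts IH] rs.
  by case: rs => [|r [|r' rs]] //= _ /andP[].
rewrite graftE /= eqxx /=.
elim: ts IH rs => [|t ts IHts] //= [IHt IHl] rs Hs Hw.
rewrite -(cat_take_drop (nleaves t) rs) all_cat in Hw.
case/andP: Hw => Hw1 Hw2.
have Hn : nleaves t <= size rs by rewrite Hs leq_addr.
rewrite IHt ?size_takel //=.
apply: IHts => //; by rewrite size_drop Hs addKn.
Qed.

Lemma diff_graft s rs : size rs = nleaves s -> diff s (graft s rs) = rs.
Proof.
elim/tree_ind2: s rs => [|a ts IH] rs.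
  by case: rs => [|r [|r' rs]].
rewrite graftE diffE /=.
elim: ts IH rs => [|t ts IHts] /=; first by move=> _ [].
move=> [IHt IHl] rs Hs.
have Hn : nleaves t <= size rs by rewrite Hs leq_addr.
rewrite IHt ?size_takel // IHts ?cat_take_drop //.
by rewrite size_drop Hs addKn.
Qed.

Lemma pre_diff s u : pre s u ->
  [/\ graft s (diff s u) = u, size (diff s u) = nleaves s & all (wf ar) (diff s u)].
Proof.
elim/tree_ind2: s u => [|a ts IH] u.
  by move=> /= ->.
case: u => [|b us] // /andP[/eqP <- H].
rewrite diffE graftE /=.
suff: [/\ graft_list ts (difflist ts us) = us,
   size (difflist ts us) = sumn (map (@nleaves _) ts) & all (wf ar) (difflist ts us)].
  by case=> -> -> ->.
elim: ts IH us H => [|t ts IHts] /=; first by move=> _ [|u us].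
move=> [IHt IHl] [|u us] //= /andP[Hu Hus].
have [e1 e2 e3] := IHt _ Hu.
have [f1 f2 f3] := IHts IHl _ Hus.
by rewrite take_size_cat // drop_size_cat // e1 f1 size_cat e2 f2 all_cat e3 f3.
Qed.

Lemma tprefix_pre x y : tprefix ar x y <-> pre x y.
Proof.
split; first by case=> rs [h1 h2 ->]; apply: graft_pre.
by move=> H; have [e1 e2 e3] := pre_diff H; exists (diff x y).
Qed.

Lemma pre_wf s u : wf ar s -> pre s u -> wf ar u.
Proof.
elim/tree_ind2: s u => [|a ts IH] u //=.
case: u => [|b us] // /andP[/eqP Hs Hw] /andP[/eqP <- H] /=.
rewrite -(all2_size H) Hs eqxx /=.
elim: ts IH us H Hw {Hs} => [|t ts IHts] /=; first by move=> _ [|u us].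
move=> [IHt IHl] [|u us] //= /andP[Hu Hus] /andP[Ht Hts].
by rewrite (IHt _ Ht Hu) (IHts IHl _ Hus Hts).
Qed.

Lemma pre_diff_iff s u v : pre s u -> pre s v ->
  pre u v = all2 pre (diff s u) (diff s v).
Proof.
elim/tree_ind2: s u v => [|a ts IH] u v.
  by rewrite /= andbT.
case: u => [|b us] //; case: v => [|c vs] // /andP[/eqP <- Hu] /andP[/eqP <- Hv].
rewrite !diffE /= eqxx /=.
elim: ts IH us vs Hu Hv => [|t ts IHts] /=; first by move=> _ [|u us] [|v vs].
move=> [IHt IHl] [|u us] [|v vs] //= /andP[Hu Hus] /andP[Hv Hvs].
have [_ e2 _] := pre_diff Hu. have [_ f2 _] := pre_diff Hv.
by rewrite all2_cat ?e2 ?f2 // (IHt _ _ Hu Hv) (IHts IHl _ _ Hus Hvs).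
Qed.

End Pre.

Section Tmap.
Variables (G : eqType) (ar : G -> nat) (k : nat).
Local Notation arB := (ext_ar ar k).

Lemma wf_tmap x : wf arB (tmap Some x) = wf ar x.
Proof.
elim/tree_ind2: x => [|a ts IH] //=.
rewrite size_map all_map; congr (_ && _).
elim: ts IH => [|t ts IHts] //= [IHt IHl].
by rewrite IHt IHts.
Qed.

Lemma pre_tmap x y : pre arB (tmap Some x) (tmap Some y) = pre ar x y.
Proof.
elim/tree_ind2: x y => [|a ts IH] y; first by rewrite /= wf_tmap.
case: y => [|b us] //=.
rewrite (inj_eq (@Some_inj _)); congr (_ && _).
elim: ts IH us => [|t ts IHts] /=; first by move=> _ [|u us].
move=> [IHt IHl] [|u us] //=.
by rewrite IHt IHts.
Qed.

Lemma all2_pre_tmap xs ys :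
  all2 (pre arB) (map (tmap Some) xs) (map (tmap Some) ys) = all2 (pre ar) xs ys.
Proof. by elim: xs ys => [|x xs IH] [|y ys] //=; rewrite pre_tmap IH. Qed.

Lemma all_wf_tmap xs : all (wf arB) (map (tmap Some) xs) = all (wf ar) xs.
Proof. by elim: xs => [|x xs IH] //=; rewrite wf_tmap IH. Qed.

Fixpoint untmap (t : tree (option G)) : tree G :=
  match t with
  | Leaf => Leaf
  | Node (Some a) ts => Node a (map untmap ts)
  | Node None _ => Leaf
  end.

Lemma untmap_tmap x : untmap (tmap Some x) = x.
Proof.
elim/tree_ind2: x => [|a ts IH] //=.
rewrite -map_comp; congr Node.
elim: ts IH => [|t ts IHts] //= [IHt IHl].
by rewrite IHt IHts.
Qed.

Lemma pre_untmap v r : pre arB v (tmap Some r) -> v = tmap Some (untmap v).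
Proof.
elim/tree_ind2: v r => [|o vs IH] r //.
case: r => [|a rs] // /andP[/eqP -> H] /=.
rewrite -map_comp; congr Node.
elim: vs IH rs H => [|v vs IHvs] /=; first by [].
move=> [IHv IHl] [|r rs] //= /andP[Hv Hvs].
by rewrite -(IHv _ Hv) -(IHvs IHl _ Hvs).
Qed.

Lemma all2_pre_untmap vs rs : all2 (pre arB) vs (map (tmap Some) rs) ->
  vs = map (tmap Some) (map untmap vs).
Proof.
elim: vs rs => [|v vs IH] [|r rs] //= /andP[Hv Hvs].
by rewrite -(pre_untmap Hv) -(IH _ Hvs).
Qed.

Lemma all2_nseq_leaf n vs : all2 (pre arB) (nseq n Leaf) vs = (size vs == n) && all (wf arB) vs.
Proof.
elim: n vs => [|n IH] [|v vs] //=.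
by rewrite IH eqSS andbCA.
Qed.

End Tmap.

Lemma prod_intervalsP (G : eqType) (ar : G -> nat) rs us :
  prod_intervals ar rs us <-> (all (wf ar) us && all2 (pre ar) us rs).
Proof.
split.
  case=> hs h; apply/andP; split.
    apply/(all_nthP Leaf) => i; rewrite hs => Hi; by case: (h i Hi).
  apply/(all2_nthP _ Leaf Leaf hs (erefl _)) => i Hi.
  by case: (h i Hi) => _ [_ /tprefix_pre].
case/andP=> hw hp; have hs := all2_size hp; split => // i Hi.
have Hi' : i < size us by rewrite hs.
have wi := (all_nthP Leaf hw) i Hi'.
split => //; split; first by apply/tprefix_pre.
apply/tprefix_pre; exact: (proj1 (all2_nthP _ Leaf Leaf hs (erefl _)) hp i Hi).
Qed.

Lemma prod_leP (G : eqType) (ar : G -> nat) k us vs :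
  size us = k -> size vs = k -> prod_le ar k us vs <-> all2 (pre ar) us vs.
Proof.
move=> hu hv; have H := all2_nthP (pre ar) Leaf Leaf hu hv.
split=> h.
  by apply/H => i Hi; apply/tprefix_pre; apply: h.
by move=> i Hi; apply/tprefix_pre; apply: (proj1 H h).
Qed.

Theorem proposition3p7 (G : finType) (ar : G -> nat)
  (ar_pos : forall a : G, 0 < ar a)
  (s t : tree G) (s_wf : wf ar s) (t_wf : wf ar t)
  (st : tprefix ar s t)
  (rs : seq (tree G))
  (rs_size : size rs = nleaves s) (rs_wf : all (wf ar) rs)
  (t_eq : t = graft s rs) :
  poset_iso (tinterval ar s t) (tprefix ar)
            (prod_intervals ar rs) (prod_le ar (nleaves s))
  /\
  poset_iso (prod_intervals ar rs) (prod_le ar (nleaves s))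
            (tinterval (ext_ar ar (nleaves s)) (corolla G (nleaves s)) (lozenge rs))
            (tprefix (ext_ar ar (nleaves s))).
Proof.
subst t.
have sT : pre ar s (graft s rs) := graft_pre rs_size rs_wf.
split.
  exists (diff s), (graft s); split.
  - move=> x [wx [/tprefix_pre sx /tprefix_pre xt]].
    apply/prod_intervalsP.
    have [e1 e2 e3] := pre_diff sx.
    by rewrite e3 /= -{1}(diff_graft rs_size) -pre_diff_iff.
  - move=> y /prod_intervalsP /andP[wy py].
    have sy : size y = nleaves s by rewrite (all2_size py).
    have gy := graft_pre sy wy.
    split; first exact: (pre_wf s_wf gy).
    split; first by apply/tprefix_pre.
    by apply/tprefix_pre; rewrite (pre_diff_iff gy sT) !diff_graft.
  - by move=> x [_ [/tprefix_pre /pre_diff [] ]].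
  - move=> y /prod_intervalsP /andP[wy py].
    by rewrite diff_graft // (all2_size py).
  - move=> x y [_ [/tprefix_pre sx _]] [_ [/tprefix_pre sy _]].
    have [_ e2 _] := pre_diff sx. have [_ f2 _] := pre_diff sy.
    apply: (iff_trans (tprefix_pre _ _ _)); rewrite (pre_diff_iff sx sy).
    exact: iff_sym (prod_leP _ e2 f2).
set k := nleaves s.
exists (fun us => lozenge us),
  (fun u => match u with Node _ vs => map (@untmap G) vs | Leaf => [::] end); split.
- move=> x /prod_intervalsP /andP[wx px].
  have sx : size x = k by rewrite (all2_size px).
  split; first by rewrite /= size_map sx eqxx all_wf_tmap.
  split; first by apply/tprefix_pre; rewrite /= all2_nseq_leaf size_map sx eqxx all_wf_tmap.
  by apply/tprefix_pre; rewrite /= ?eqxx all2_pre_tmap.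
- move=> [|o vs] [wy [/tprefix_pre cy /tprefix_pre yl]] //.
  case/andP: cy => /eqP Ho _; subst o.
  case/andP: yl => _ yl.
  have E := all2_pre_untmap yl.
  apply/prod_intervalsP.
  rewrite E /= in wy yl; case/andP: wy => _.
  by rewrite all_wf_tmap all2_pre_tmap in yl * => ->.
- by move=> x _ /=; rewrite -map_comp (eq_map (@untmap_tmap _)) map_id.
- move=> [|o vs] [wy [/tprefix_pre cy /tprefix_pre yl]] //.
  case/andP: cy => /eqP Ho _; subst o.
  case/andP: yl => _ yl.
  by rewrite /lozenge -(all2_pre_untmap yl).
- move=> x y /prod_intervalsP /andP[_ px] /prod_intervalsP /andP[_ py].
  have sx : size x = k by rewrite (all2_size px).
  have sy : size y = k by rewrite (all2_size py).
  apply: (iff_trans (prod_leP _ sx sy)); rewrite -(@all2_pre_tmap _ ar k).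
  split; first by move=> h; apply/tprefix_pre; rewrite /= ?eqxx.
  by move/tprefix_pre; rewrite /= ?eqxx.
Qed.
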